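(* Let $\mathcal{C}$ be a division Cayley algebra over a field $\mathbb{F}$ with norm $\mathrm{n}$. Let $\mathcal{K}$ be a two-dimensional composition subalgebra of $\mathcal{C}$, let $x\in\mathcal{C}$ be arbitrary, and let $\varphi$ be a local automorphism of $\mathcal{C}$. Then there is an automorphism $\psi$ of $\mathcal{C}$ such that $\psi|_{\mathcal{K}}=\varphi|_{\mathcal{K}}$ and $\psi(x)=\varphi(x)$.
   Context: A Cayley (octonion) algebra over $\mathbb{F}$ is a unital nonassociative algebra $\mathcal{C}$ of dimension $8$ over $\mathbb{F}$ endowed with a quadratic form $\mathrm{n}:\mathcal{C}\to\mathbb{F}$ (the norm) such that $\mathrm{n}(xy)=\mathrm{n}(x)\mathrm{n}(y)$ for all $x,y$ and whose polar form $\mathrm{n}(x,y)=\mathrm{n}(x+y)-\mathrm{n}(x)-\mathrm{n}(y)$ is nondegenerate. It is a division Cayley algebra if it is a division algebra (equivalently, $\mathrm{n}$ is anisotropic: $\mathrm{n}(x)\neq0$ for $x\neq0$). A two-dimensional composition subalgebra $\mathcal{K}$ is a two-dimensional subalgebra containing $1$ such that the restriction of $\mathrm{n}$ to $\mathcal{K}$ is regular (its polar form restricted to $\mathcal{K}$ is nondegenerate). A linear map $\varphi:\mathcal{C}\to\mathcal{C}$ is a local automorphism if for every $y\in\mathcal{C}$ there is an automorphism $\varphi_y$ of $\mathcal{C}$ with $\varphi(y)=\varphi_y(y)$. *)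

(* Defs.v *)
(* A Cayley algebra over a field F is modelled as a
   finite-dimensional F-vector space C (vectType) with an explicit bilinear
   multiplication [mul], unit [one] and quadratic norm [n]. *)
From mathcomp Require Import all_boot all_order all_algebra.
Set Implicit Arguments. Unset Strict Implicit. Unset Printing Implicit Defensive.
Import GRing.Theory.
Local Open Scope ring_scope.

Section Cayley.
Variables (F : fieldType) (C : vectType F).

Definition polar (n : C -> F) (x y : C) : F := n (x + y) - n x - n y.

Definition is_bilinear_mul (mul : C -> C -> C) : Prop :=
  (forall (a : F) (x y z : C), mul (a *: x + y) z = a *: mul x z + mul y z) /\
  (forall (a : F) (x y z : C), mul z (a *: x + y) = a *: mul z x + mul z y).

Definition is_quadratic_form (n : C -> F) : Prop :=
  (forall (a : F) (x : C), n (a *: x) = a ^+ 2 * n x) /\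
  (forall (a : F) (x y z : C),
     polar n (a *: x + y) z = a * polar n x z + polar n y z).

Definition polar_nondegenerate (n : C -> F) : Prop :=
  forall x : C, (forall y : C, polar n x y = 0) -> x = 0.

Definition is_cayley_algebra (mul : C -> C -> C) (one : C) (n : C -> F) : Prop :=
  is_bilinear_mul mul /\
  (forall x, mul one x = x /\ mul x one = x) /\
  \dim (fullv : {vspace C}) = 8%N /\
  is_quadratic_form n /\
  polar_nondegenerate n /\
  (forall x y, n (mul x y) = n x * n y).

Definition is_division_algebra (mul : C -> C -> C) : Prop :=
  forall a : C, a != 0 -> forall b : C,
    (exists x, mul a x = b /\ forall x', mul a x' = b -> x' = x) /\
    (exists y, mul y a = b /\ forall y', mul y' a = b -> y' = y).

Definition is_linear_map (f : C -> C) : Prop :=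
  forall (a : F) (x y : C), f (a *: x + y) = a *: f x + f y.

Definition is_automorphism (mul : C -> C -> C) (f : C -> C) : Prop :=
  [/\ is_linear_map f, bijective f & forall x y, f (mul x y) = mul (f x) (f y)].

Definition is_local_automorphism (mul : C -> C -> C) (phi : C -> C) : Prop :=
  is_linear_map phi /\
  forall y : C, exists g : C -> C, is_automorphism mul g /\ phi y = g y.

Definition is_2dim_composition_subalgebra (mul : C -> C -> C) (one : C)
    (n : C -> F) (K : {vspace C}) : Prop :=
  [/\ \dim K = 2%N,
      one \in K,
      (forall x y, x \in K -> y \in K -> mul x y \in K)
    & forall x, x \in K -> (forall y, y \in K -> polar n x y = 0) -> x = 0].

End Cayley.

(* Main.v *)
Require Import Defs.
From mathcomp Require Import all_boot all_order all_algebra.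
From mathcomp Require Import ring.
From Stdlib Require Import ClassicalEpsilon IndefiniteDescription.
Set Implicit Arguments. Unset Strict Implicit. Unset Printing Implicit Defensive.
Import GRing.Theory.
Local Open Scope ring_scope.

Lemma common_zero (F : fieldType) (C : vectType F) (k : nat) (l : 'I_k -> C -> F) :
  (forall i a x y, l i (a *: x + y) = a * l i x + l i y) ->
  (k < \dim (fullv : {vspace C}))%N -> exists v, v != 0 /\ forall i, l i v = 0.
Proof.
move=> lin ltk.
pose b := vbasis (fullv : {vspace C}).
have bfree : free b := basis_free (vbasisP fullv).
pose M : 'M[F]_(\dim (fullv : {vspace C}), k) := \matrix_(j, i) l i b`_j.
have nrf : ~~ row_free M.
  rewrite /row_free; apply/negP => /eqP H.
  by have := rank_leq_col M; rewrite H leqNgt ltk.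
have Hker : kermx M != 0 by rewrite kermx_eq0.
have [j Hj] : exists j, row j (kermx M) != 0.
  apply/existsP; move: Hker; apply: contraR; rewrite negb_exists => /forallP H.
  by apply/eqP/row_matrixP => j; rewrite row0; apply/eqP; rewrite -[_ == _]negbK H.
set c := row j (kermx M) in Hj.
have cM : c *m M = 0 by rewrite /c -row_mul mulmx_ker row0.
have l0 i : l i 0 = 0.
  by have := lin i (-1) 0 0; rewrite scaler0 addr0 mulN1r addNr.
have lsum i (I : finType) (f : I -> C) (g : I -> F) :
    l i (\sum_(s : I) g s *: f s) = \sum_(s : I) g s * l i (f s).
  elim/big_rec2: _ => [|s y1 y2 _ <-]; first exact: l0.
  by rewrite lin.
exists (\sum_j' c 0 j' *: b`_j'); split.
- apply/negP => /eqP H.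
  move/freeP: bfree => /(_ (fun j' => c 0 j') H) Hc.
  by move: Hj; rewrite (_ : c = 0) ?eqxx //; apply/rowP => i; rewrite [RHS]mxE Hc.
- move=> i; rewrite lsum.
  transitivity ((c *m M) 0 i); last by rewrite cM mxE.
  by rewrite [RHS]mxE; apply: eq_bigr => s _; rewrite [M _ _]mxE.
Qed.

Section Alg.
Variables (F : fieldType) (C : vectType F) (mul : C -> C -> C) (one : C) (n : C -> F).
Local Notation "x ** y" := (mul x y) (at level 40, left associativity).
Local Notation pl := (polar n).
Hypothesis mulL : forall (a : F) (x y z : C), (a *: x + y) ** z = a *: (x ** z) + y ** z.
Hypothesis mulR : forall (a : F) (x y z : C), z ** (a *: x + y) = a *: (z ** x) + z ** y.
Hypothesis one_l : forall x, one ** x = x.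
Hypothesis one_r : forall x, x ** one = x.
Hypothesis nZ : forall (a : F) (x : C), n (a *: x) = a ^+ 2 * n x.
Hypothesis plL : forall (a : F) (x y z : C), pl (a *: x + y) z = a * pl x z + pl y z.
Hypothesis nondeg : forall x : C, (forall y : C, pl x y = 0) -> x = 0.
Hypothesis nM : forall x y, n (x ** y) = n x * n y.
Hypothesis hdiv : is_division_algebra mul.
Hypothesis hdim8 : \dim (fullv : {vspace C}) = 8%N.

Lemma mDl x y z : (x + y) ** z = x ** z + y ** z.
Proof. by rewrite -[x]scale1r mulL !scale1r. Qed.
Lemma mDr x y z : z ** (x + y) = z ** x + z ** y.
Proof. by rewrite -[x]scale1r mulR !scale1r. Qed.
Lemma m0l z : 0 ** z = 0.
Proof. by have := mulL (-1) 0 0 z; rewrite scaler0 addr0 scaleN1r addNr. Qed.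
Lemma m0r z : z ** 0 = 0.
Proof. by have := mulR (-1) 0 0 z; rewrite scaler0 addr0 scaleN1r addNr. Qed.
Lemma mZl a x z : (a *: x) ** z = a *: (x ** z).
Proof. by rewrite -[a *: x]addr0 mulL m0l addr0. Qed.
Lemma mZr a x z : z ** (a *: x) = a *: (z ** x).
Proof. by rewrite -[a *: x]addr0 mulR m0r addr0. Qed.
Lemma mNl x z : (- x) ** z = - (x ** z).
Proof. by rewrite -scaleN1r mZl scaleN1r. Qed.
Lemma mNr x z : z ** (- x) = - (z ** x).
Proof. by rewrite -scaleN1r mZr scaleN1r. Qed.
Lemma mBl x y z : (x - y) ** z = x ** z - y ** z.
Proof. by rewrite mDl mNl. Qed.
Lemma mBr x y z : z ** (x - y) = z ** x - z ** y.
Proof. by rewrite mDr mNr. Qed.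

Lemma plC x y : pl x y = pl y x.
Proof. by rewrite /polar (addrC y x) -!addrA (addrC (- n y)). Qed.
Lemma plDl x y z : pl (x + y) z = pl x z + pl y z.
Proof. by rewrite -[x]scale1r plL mul1r scale1r. Qed.
Lemma pl0l z : pl 0 z = 0.
Proof. by have := plL (-1) 0 0 z; rewrite scaler0 addr0 mulN1r addNr. Qed.
Lemma plZl a x z : pl (a *: x) z = a * pl x z.
Proof. by rewrite -[a *: x]addr0 plL pl0l addr0. Qed.
Lemma plNl x z : pl (- x) z = - pl x z.
Proof. by rewrite -scaleN1r plZl mulN1r. Qed.
Lemma plBl x y z : pl (x - y) z = pl x z - pl y z.
Proof. by rewrite plDl plNl. Qed.
Lemma plDr x y z : pl z (x + y) = pl z x + pl z y.
Proof. by rewrite plC plDl !(plC z). Qed.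
Lemma pl0r z : pl z 0 = 0.
Proof. by rewrite plC pl0l. Qed.
Lemma plZr a x z : pl z (a *: x) = a * pl z x.
Proof. by rewrite plC plZl plC. Qed.
Lemma plNr x z : pl z (- x) = - pl z x.
Proof. by rewrite plC plNl plC. Qed.
Lemma plBr x y z : pl z (x - y) = pl z x - pl z y.
Proof. by rewrite plDr plNr. Qed.
Lemma nD x y : n (x + y) = n x + n y + pl x y.
Proof. by rewrite /polar; ring. Qed.
Lemma n0 : n 0 = 0.
Proof. by rewrite -(scale0r 0) nZ expr0n GRing.mul0r. Qed.
Lemma plxx x : pl x x = 2%:R * n x.
Proof.
have -> : pl x x = n (2%:R *: x) - n x - n x by rewrite /polar scaler_nat mulr2n.
by rewrite nZ; ring.
Qed.


Lemma exists_nz : exists y : C, y != 0.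
Proof. by exists (vpick fullv); rewrite vpick0 -dimv_eq0 hdim8. Qed.
Lemma one_nz : one != 0.
Proof.
apply/negP => /eqP H; have [y /negP] := exists_nz; apply.
by rewrite -(one_l y) H m0l.
Qed.
Lemma aniso x : n x = 0 -> x = 0.
Proof.
move=> nx; apply/eqP; apply/negPn/negP => x0.
have [[z [xz _]] _] := hdiv x0 one.
have n1 : n one = 0 by rewrite -xz nM nx GRing.mul0r.
have ny y : n y = 0 by rewrite -(one_l y) nM n1 GRing.mul0r.
have [y /negP] := exists_nz; apply; apply/eqP; apply: nondeg => z'.
by rewrite /polar !ny subrr subr0.
Qed.

Lemma lin_trans (R : comRingType) (A B X Y : R) : X = Y -> A - B = X - Y -> A = B.
Proof. by move=> -> /eqP; rewrite subrr subr_eq0 => /eqP. Qed.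

Lemma eq_pl u v : (forall z, pl u z = pl v z) -> u = v.
Proof.
move=> H; apply/eqP; rewrite -subr_eq0; apply/eqP; apply: nondeg => z.
by rewrite plBl H subrr.
Qed.

Ltac plexp := rewrite ?(plDl, plBl, plZl, plNl, pl0l, plDr, plBr, plZr, plNr, pl0r).
Ltac mexp := rewrite ?(mDl, mBl, mZl, mNl, m0l, mDr, mBr, mZr, mNr, m0r, one_l, one_r).

Lemma L1 x y z : pl (x ** y) (x ** z) = n x * pl y z.
Proof.
have H := nM x (y + z); rewrite mDr !nD !nM in H.
by apply: (lin_trans H); ring.
Qed.
Lemma L1r x y z : pl (y ** x) (z ** x) = n x * pl y z.
Proof.
have H := nM (y + z) x; rewrite mDl !nD !nM in H.
by apply: (lin_trans H); ring.
Qed.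
Lemma L2 x y w z : pl (x ** y) (w ** z) + pl (x ** z) (w ** y) = pl x w * pl y z.
Proof.
have H := L1 (x + w) y z; rewrite !mDl !plDl !plDr nD (L1 x) (L1 w) in H.
by rewrite (plC (x ** z)); apply: (lin_trans H); ring.
Qed.
Lemma L2r x y w z : pl (y ** x) (z ** w) + pl (z ** x) (y ** w) = pl x w * pl y z.
Proof.
have H := L1r (x + w) y z; rewrite !mDr !plDl !plDr nD (L1r x) (L1r w) in H.
by rewrite (plC (z ** x)); apply: (lin_trans H); ring.
Qed.

Definition t x := pl x one.
Definition cj_def x := t x *: one - x.
Fact cj_key : unit. Proof. exact: tt. Qed.
Definition cj := locked_with cj_key cj_def.
Lemma cjE x : cj x = t x *: one - x. Proof. by rewrite [cj]unlock. Qed.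

Lemma tL a x y : t (a *: x + y) = a * t x + t y.
Proof. by rewrite /t plL. Qed.
Lemma tD x y : t (x + y) = t x + t y.
Proof. by rewrite /t plDl. Qed.
Lemma tZ a x : t (a *: x) = a * t x.
Proof. by rewrite /t plZl. Qed.
Lemma tN x : t (- x) = - t x.
Proof. by rewrite /t plNl. Qed.
Lemma cjD x y : cj (x + y) = cj x + cj y.
Proof. by rewrite !cjE tD scalerDl addrACA opprD. Qed.
Lemma cjZ a x : cj (a *: x) = a *: cj x.
Proof. by rewrite !cjE tZ scalerBr scalerA. Qed.
Lemma cjN x : cj (- x) = - cj x.
Proof. by rewrite -scaleN1r cjZ scaleN1r. Qed.

Lemma L3 x y z : pl (x ** y) z = pl y (cj x ** z).
Proof.
have H := L2 x y one z; rewrite !one_l in H.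
rewrite !cjE mBl mZl one_l plBr plZr (plC y (x ** z)).
by apply: (lin_trans H); rewrite /t; ring.
Qed.
Lemma L3r x y z : pl (y ** x) z = pl y (z ** cj x).
Proof.
have H := L2r x y one z; rewrite !one_r in H.
rewrite !cjE mBr mZr one_r plBr plZr (plC y (z ** x)).
by apply: (lin_trans H); rewrite /t; ring.
Qed.

Lemma Q x y : cj x ** (x ** y) = n x *: y.
Proof.
apply: eq_pl => z; rewrite plC -L3 L1 plZl plC //.
Qed.
Lemma Qr x y : (y ** x) ** cj x = n x *: y.
Proof.
apply: eq_pl => z; rewrite plC -L3r L1r plZl plC //.
Qed.

Lemma quad x : x ** x = t x *: x - n x *: one.
Proof.
have := Q x one; rewrite one_r !cjE mBl mZl one_l => H.
by rewrite -H opprB addrC subrK.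
Qed.

Lemma linquad x y : x ** y + y ** x = t x *: y + t y *: x - pl x y *: one.
Proof.
have H := quad (x + y); rewrite !mDl !mDr (quad x) (quad y) nD tD in H.
apply: eq_pl => z; have Hz := congr1 (pl ^~ z) H; simpl in Hz.
plexp; plexp.
move: Hz; plexp; plexp => Hz.
by apply: (lin_trans Hz); ring.
Qed.


Section CD.
Variables (P : C -> Prop) (u : C).
Hypothesis HP1 : P one.
Hypothesis HPm : forall p q, P p -> P q -> P (p ** q).
Hypothesis HPc : forall p, P p -> P (cj p).
Hypothesis HPu : forall p, P p -> pl p u = 0.

Lemma tu : t u = 0.
Proof. by rewrite /t plC HPu. Qed.
Lemma cju : cj u = - u.
Proof. by rewrite !cjE tu scale0r sub0r. Qed.
Lemma perp b c : P b -> P c -> pl b (c ** u) = 0.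
Proof. by move=> Pb Pc; rewrite plC L3 plC HPu //; apply: HPm => //; apply: HPc. Qed.
Lemma perp' b c : P b -> P c -> pl (c ** u) b = 0.
Proof. by move=> Pb Pc; rewrite plC perp. Qed.
Lemma cj_cu c : P c -> cj (c ** u) = - (c ** u).
Proof. by move=> Pc; rewrite !cjE /t perp' // scale0r sub0r. Qed.

Lemma CDi b e : P b -> P e -> b ** (e ** u) = (e ** b) ** u.
Proof.
move=> Pb Pe; apply: eq_pl => z.
rewrite (L3 b (e ** u) z) (L3r u (e ** b) z) cju mNr plNr.
have H1 := L2r b e u z; rewrite (HPu Pb) GRing.mul0r in H1.
have -> : pl (e ** b) (z ** u) = - pl (z ** b) (e ** u).
  by apply/eqP; rewrite -addr_eq0 H1.
have H2 : z ** b = t z *: b + t b *: z - pl z b *: one - b ** z.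
  by rewrite -linquad addrK.
rewrite opprK H2 !cjE mBl mZl one_l; plexp.
rewrite !(plC (e ** u)) (perp Pb Pe) (perp HP1 Pe).
by ring.
Qed.

Lemma CDii c d : P c -> P d -> (c ** u) ** d = (c ** cj d) ** u.
Proof.
move=> Pc Pd; apply: eq_pl => z.
rewrite L3r [RHS]L3r cju mNr plNr.
have H1 := L2r (cj d) c u z; rewrite (HPu (HPc Pd)) GRing.mul0r in H1.
have -> : pl (c ** cj d) (z ** u) = - pl (z ** cj d) (c ** u).
  by apply/eqP; rewrite -addr_eq0 H1.
by rewrite opprK plC.
Qed.

Lemma CDiii c e : P c -> P e -> (c ** u) ** (e ** u) = - (n u *: (cj e ** c)).
Proof.
move=> Pc Pe; apply: eq_pl => z.
rewrite L3r (cj_cu Pe) mNr plNr.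
have H1 := L2 c u z (e ** u).
rewrite (CDi Pc Pe) L1r in H1.
have H3 := L1r u one e; rewrite one_l in H3; rewrite H3 in H1.
have -> : pl (c ** u) (z ** (e ** u)) = pl c z * (n u * pl one e) - n u * pl (e ** c) z.
  by rewrite -H1 addrK.
rewrite plNl plZl !cjE mBl mZl one_l; plexp.
by rewrite (plC one e) /t; ring.
Qed.

Lemma CDmul b c d e : P b -> P c -> P d -> P e ->
  (b + c ** u) ** (d + e ** u) = (b ** d - n u *: (cj e ** c)) + (e ** b + c ** cj d) ** u.
Proof.
move=> Pb Pc Pd Pe.
rewrite mDl (mDr d (e ** u) b) (mDr d (e ** u) (c ** u)) (CDi Pb Pe) (CDii Pc Pd) (CDiii Pc Pe) (mDl (e ** b) (c ** cj d) u).
apply: eq_pl => z; plexp; by ring.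
Qed.

Lemma CDcj b c : P c -> cj (b + c ** u) = cj b - c ** u.
Proof. by move=> Pc; rewrite cjD cj_cu. Qed.

Lemma CDpl b c d e : P b -> P c -> P d -> P e ->
  pl (b + c ** u) (d + e ** u) = pl b d + n u * pl c e.
Proof.
move=> Pb Pc Pd Pe; plexp.
by rewrite (perp Pb Pe) (perp' Pd Pc) L1r; ring.
Qed.

Hypothesis HPn : forall p, P p -> (forall q, P q -> pl p q = 0) -> p = 0.
Hypothesis nu0 : n u != 0.

Lemma CDuniq b c : P b -> P c -> b + c ** u = 0 -> b = 0 /\ c = 0.
Proof.
move=> Pb Pc H.
have Hb : b = 0.
  apply: HPn => // q Pq.
  have := congr1 (pl ^~ q) H; rewrite /= plDl (perp' Pq Pc) pl0l addr0 //.
split => //; move: H; rewrite Hb add0r => /(congr1 n); rewrite nM n0 => /eqP.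
by rewrite mulf_eq0 (negbTE nu0) orbF => /eqP /aniso.
Qed.

End CD.


Record good (P : C -> Prop) : Prop := Good {
  good1 : P one;
  goodL : forall a p q, P p -> P q -> P (a *: p + q);
  goodM : forall p q, P p -> P q -> P (p ** q);
  goodC : forall p, P p -> P (cj p);
  goodN : forall p, P p -> (forall q, P q -> pl p q = 0) -> p = 0 }.

Record iso (P P' : C -> Prop) (R : C -> C -> Prop) : Prop := Iso {
  iso1 : R one one;
  isoP : forall p p', R p p' -> P p /\ P' p';
  isoL : forall a p p' q q', R p p' -> R q q' -> R (a *: p + q) (a *: p' + q');
  isoM : forall p p' q q', R p p' -> R q q' -> R (p ** q) (p' ** q');
  isoC : forall p p', R p p' -> R (cj p) (cj p');
  isoPl : forall p p' q q', R p p' -> R q q' -> pl p q = pl p' q';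
  isoT : forall p, P p -> exists p', R p p';
  isoS : forall p', P' p' -> exists p, R p p' }.

Definition P2 (P : C -> Prop) u y := exists b c, [/\ P b, P c & y = b + c ** u].
Definition R2 (R : C -> C -> Prop) u u' y y' :=
  exists b c b' c', [/\ R b b', R c c', y = b + c ** u & y' = b' + c' ** u'].

Lemma good0 P : good P -> P 0.
Proof. by case=> H1 HL _ _ _; have := HL (-1) _ _ H1 H1; rewrite scaleN1r addNr. Qed.

Lemma iso0 P P' R : iso P P' R -> R 0 0.
Proof. by case=> H1 _ HL _ _ _ _ _; have := HL (-1) _ _ _ _ H1 H1; rewrite scaleN1r addNr. Qed.

Lemma good_step P u : good P -> (forall p, P p -> pl p u = 0) -> n u != 0 -> good (P2 P u).
Proof.
move=> gP Pu nu0; have P0 := good0 gP.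
case: gP => P1 PL PM PC PN.
split.
- by exists one, 0; rewrite m0l addr0.
- move=> a _ _ [b [c [Pb Pc ->]]] [d [e [Pd Pe ->]]].
  exists (a *: b + d), (a *: c + e); split; [exact: PL | exact: PL |].
  by rewrite mulL scalerDr addrACA.
- move=> _ _ [b [c [Pb Pc ->]]] [d [e [Pd Pe ->]]].
  rewrite (CDmul P1 PM PC Pu) //.
  exists ((- n u) *: (cj e ** c) + b ** d), (1 *: (e ** b) + c ** cj d); split.
  + by apply: PL; apply: PM => //; apply: PC.
  + by apply: PL; apply: PM => //; apply: PC.
  + by rewrite scale1r scaleNr [- _ + _]addrC.
- move=> _ [b [c [Pb Pc ->]]].
  rewrite (CDcj P1 PM PC Pu) //.
  exists (cj b), ((-1) *: c + 0); split; [exact: PC | exact: PL |].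
  by rewrite addr0 scaleN1r mNl.
- move=> _ [b [c [Pb Pc ->]]] H.
  have Hb : b = 0.
    apply: PN => // q Pq.
    have := H (q + 0 ** u) (ex_intro _ q (ex_intro _ 0 (And3 Pq P0 erefl))).
    by rewrite (CDpl PM PC Pu) // pl0r GRing.mulr0 addr0.
  have Hc : c = 0.
    apply: PN => // q Pq.
    have := H (0 + q ** u) (ex_intro _ 0 (ex_intro _ q (And3 P0 Pq erefl))).
    rewrite (CDpl PM PC Pu) // Hb pl0l add0r => /eqP.
    by rewrite mulf_eq0 (negbTE nu0) => /eqP.
  by rewrite Hb Hc m0l addr0.
Qed.

Lemma iso_step P P' R u u' : good P -> good P' -> iso P P' R ->
  (forall p, P p -> pl p u = 0) -> (forall p, P' p -> pl p u' = 0) ->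
  n u' = n u -> iso (P2 P u) (P2 P' u') (R2 R u u').
Proof.
move=> gP gP' iR Pu Pu' nuu.
have R0 := iso0 iR.
case: gP => P1 PL PM PC PN; case: gP' => P1' PL' PM' PC' PN'.
case: iR => R1 RP RL RM RC RPl RT RS.
split.
- by exists one, 0, one, 0; split => //; rewrite m0l addr0.
- move=> _ _ [b [c [b' [c' [Rb Rc -> ->]]]]].
  have [Pb Pb'] := RP _ _ Rb; have [Pc Pc'] := RP _ _ Rc.
  by split; [exists b, c | exists b', c'].
- move=> a _ _ _ _ [b [c [b' [c' [Rb Rc -> ->]]]]] [d [e [d' [e' [Rd Re -> ->]]]]].
  exists (a *: b + d), (a *: c + e), (a *: b' + d'), (a *: c' + e'); split.
  + exact: RL. + exact: RL.
  + by rewrite mulL scalerDr addrACA.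
  + by rewrite mulL scalerDr addrACA.
- move=> _ _ _ _ [b [c [b' [c' [Rb Rc -> ->]]]]] [d [e [d' [e' [Rd Re -> ->]]]]].
  have [Pb Pb'] := RP _ _ Rb; have [Pc Pc'] := RP _ _ Rc.
  have [Pd Pd'] := RP _ _ Rd; have [Pe Pe'] := RP _ _ Re.
  rewrite (CDmul P1 PM PC Pu) // (CDmul P1' PM' PC' Pu') //.
  exists ((- n u) *: (cj e ** c) + b ** d), (1 *: (e ** b) + c ** cj d).
  exists ((- n u) *: (cj e' ** c') + b' ** d'), (1 *: (e' ** b') + c' ** cj d'); split.
  + by apply: RL; apply: RM => //; apply: RC.
  + by apply: RL; apply: RM => //; apply: RC.
  + by rewrite scale1r scaleNr [- _ + _]addrC.
  + by rewrite scale1r scaleNr [- _ + _]addrC nuu.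
- move=> _ _ [b [c [b' [c' [Rb Rc -> ->]]]]].
  have [Pb Pb'] := RP _ _ Rb; have [Pc Pc'] := RP _ _ Rc.
  rewrite (CDcj P1 PM PC Pu) // (CDcj P1' PM' PC' Pu') //.
  exists (cj b), ((-1) *: c + 0), (cj b'), ((-1) *: c' + 0); split.
  + exact: RC. + exact: RL.
  + by rewrite addr0 scaleN1r mNl.
  + by rewrite addr0 scaleN1r mNl.
- move=> _ _ _ _ [b [c [b' [c' [Rb Rc -> ->]]]]] [d [e [d' [e' [Rd Re -> ->]]]]].
  have [Pb Pb'] := RP _ _ Rb; have [Pc Pc'] := RP _ _ Rc.
  have [Pd Pd'] := RP _ _ Rd; have [Pe Pe'] := RP _ _ Re.
  rewrite (CDpl PM PC Pu) // (CDpl PM' PC' Pu') //.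
  by rewrite (RPl _ _ _ _ Rb Rd) (RPl _ _ _ _ Rc Re) nuu.
- move=> _ [b [c [Pb Pc ->]]].
  have [b' Rb] := RT _ Pb; have [c' Rc] := RT _ Pc.
  by exists (b' + c' ** u'), b, c, b', c'.
- move=> _ [b' [c' [Pb' Pc' ->]]].
  have [b Rb] := RS _ Pb'; have [c Rc] := RS _ Pc'.
  by exists (b + c ** u), b, c, b', c'.
Qed.

Lemma R2_embed P P' R u u' p p' : iso P P' R -> R p p' -> R2 R u u' p p'.
Proof.
move=> iR Rp; exists p, 0, p', 0; split => //; first exact: iso0 iR.
  by rewrite m0l addr0. by rewrite m0l addr0.
Qed.

Lemma R2_u P P' R u u' c c' : iso P P' R -> R c c' -> R2 R u u' (c ** u) (c' ** u').
Proof.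
move=> iR Rc; exists 0, c, 0, c'; split => //; first exact: iso0 iR.
  by rewrite add0r. by rewrite add0r.
Qed.


Definition Ka a p := exists al be, p = al *: one + be *: a.
Definition R0 a a' p p' :=
  exists al be, p = al *: one + be *: a /\ p' = al *: one + be *: a'.

Lemma Ka_mul a al be ga de :
  (al *: one + be *: a) ** (ga *: one + de *: a) =
  (al * ga - be * de * n a) *: one + (al * de + be * ga + be * de * t a) *: a.
Proof. by apply: eq_pl => z; mexp; rewrite quad; plexp; ring. Qed.

Lemma Ka_cj a al be :
  cj (al *: one + be *: a) = (al * (t one - 1) + be * t a) *: one + (- be) *: a.
Proof. by rewrite cjD !cjZ !cjE; apply: eq_pl => z; plexp; ring. Qed.

Lemma good_Ka a : (forall p, Ka a p -> (forall q, Ka a q -> pl p q = 0) -> p = 0) ->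
  good (Ka a).
Proof.
move=> HN; split => //.
- by exists 1, 0; rewrite scale1r scale0r addr0.
- move=> c _ _ [al [be ->]] [ga [de ->]].
  exists (c * al + ga), (c * be + de).
  by apply: eq_pl => z; plexp; ring.
- move=> _ _ [al [be ->]] [ga [de ->]].
  by rewrite Ka_mul; eexists; eexists.
- move=> _ [al [be ->]].
  by rewrite Ka_cj; eexists; eexists.
Qed.

Lemma iso_R0 a a' : t a' = t a -> n a' = n a -> iso (Ka a) (Ka a') (R0 a a').
Proof.
move=> ta na; split.
- by exists 1, 0; rewrite scale1r !scale0r !addr0.
- by move=> p p' [al [be [-> ->]]]; split; exists al, be.
- move=> c _ _ _ _ [al [be [-> ->]]] [ga [de [-> ->]]].
  exists (c * al + ga), (c * be + de).
  by split; apply: eq_pl => z; plexp; ring.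
- move=> _ _ _ _ [al [be [-> ->]]] [ga [de [-> ->]]].
  by rewrite !Ka_mul ta na; eexists; eexists.
- move=> _ _ [al [be [-> ->]]].
  by rewrite !Ka_cj ta; eexists; eexists.
- move=> _ _ _ _ [al [be [-> ->]]] [ga [de [-> ->]]].
  plexp; rewrite !plxx (plC one a) (plC one a') -/(t a) -/(t a') ta na.
  by ring.
- by move=> _ [al [be ->]]; exists (al *: one + be *: a'), al, be.
- by move=> _ [al [be ->]]; exists (al *: one + be *: a), al, be.
Qed.

Lemma final P P' R : iso P P' R -> (forall y, P y) -> (forall y, P' y) ->
  exists psi, is_automorphism mul psi /\ (forall p p', R p p' -> psi p = p').
Proof.
move=> iR PT PT'.
have R0' := iso0 iR.
case: iR => R1 RP RL RM RC RPl RT RS.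
have Rfun y y1 y2 : R y y1 -> R y y2 -> y1 = y2.
  move=> H1 H2; have := RL (-1) _ _ _ _ H1 H2; rewrite !scaleN1r addNr => H.
  apply/eqP; rewrite eq_sym -subr_eq0 addrC; apply/eqP; apply: nondeg => q.
  have [q0 Rq] := RS _ (PT' q).
  by rewrite -(RPl _ _ _ _ H Rq) pl0l.
have Rinj y1 y2 y : R y1 y -> R y2 y -> y1 = y2.
  move=> H1 H2; have := RL (-1) _ _ _ _ H1 H2; rewrite !scaleN1r addNr => H.
  apply/eqP; rewrite eq_sym -subr_eq0 addrC; apply/eqP; apply: nondeg => q.
  have [q0 Rq] := RT _ (PT q).
  by rewrite (RPl _ _ _ _ H Rq) pl0l.
pose psi y := proj1_sig (constructive_indefinite_description _ (RT _ (PT y))).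
pose psi' y := proj1_sig (constructive_indefinite_description _ (RS _ (PT' y))).
have Hpsi y : R y (psi y) by rewrite /psi; case: constructive_indefinite_description.
have Hpsi' y : R (psi' y) y by rewrite /psi'; case: constructive_indefinite_description.
exists psi; split; last by move=> p p' Rp; exact: Rfun (Hpsi p) Rp.
split.
- move=> c y z; apply: Rfun (Hpsi _) _; exact: RL.
- exists psi'.
  + move=> y; apply: Rinj (Hpsi' _) (Hpsi y).
  + move=> y; apply: Rfun (Hpsi _) (Hpsi' y).
- move=> y z; apply: Rfun (Hpsi _) _; exact: RM.
Qed.


Definition form (a w v : C) (c : nat -> F) :=
  ((c 0%N *: one + c 1%N *: a) + (c 2%N *: one + c 3%N *: a) ** w) +
  ((c 4%N *: one + c 5%N *: a) + (c 6%N *: one + c 7%N *: a) ** w) ** v.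

Lemma span8 a w v : \dim (fullv : {vspace C}) = 8%N -> good (Ka a) ->
  (forall al be, al *: one + be *: a = 0 -> al = 0 /\ be = 0) ->
  (forall p, Ka a p -> pl p w = 0) -> n w != 0 ->
  (forall p, P2 (Ka a) w p -> pl p v = 0) -> n v != 0 ->
  forall y, P2 (P2 (Ka a) w) v y.
Proof.
move=> dim8 gK indep Hw nw Hv nv.
have g1 := good_step gK Hw nw.
pose e := [tuple one; a; w; a ** w; v; a ** v; w ** v; (a ** w) ** v].
have Esum (k : 'I_8 -> F) : \sum_(i < 8) k i *: e`_i = form a w v (fun m => k (inord m)).
  rewrite (eq_bigr (fun i : 'I_8 => k (inord i) *: e`_i)) => [|i _]; last by rewrite inord_val.
  rewrite !big_ord_recl big_ord0 /=.
  rewrite /form /bump /=.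
  by apply: eq_pl => z; mexp; plexp; ring.
have Kab al be : Ka a (al *: one + be *: a) by exists al, be.
have P1ab b c : Ka a b -> Ka a c -> P2 (Ka a) w (b + c ** w).
  by move=> Hb Hc; exists b, c.
have split4 (c : nat -> F) : form a w v c = 0 ->
    [/\ c 0%N = 0, c 1%N = 0, c 2%N = 0, c 3%N = 0 &
     c 4%N = 0 /\ [/\ c 5%N = 0, c 6%N = 0 & c 7%N = 0]].
  rewrite /form => H.
  have [Hb Hc] := CDuniq (goodM g1) (goodC g1) Hv (goodN g1) nv
     (P1ab _ _ (Kab _ _) (Kab _ _)) (P1ab _ _ (Kab _ _) (Kab _ _)) H.
  have [H0 H2] := CDuniq (goodM gK) (goodC gK) Hw (goodN gK) nw (Kab _ _) (Kab _ _) Hb.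
  have [H4 H6] := CDuniq (goodM gK) (goodC gK) Hw (goodN gK) nw (Kab _ _) (Kab _ _) Hc.
  have [-> ->] := indep _ _ H0; have [-> ->] := indep _ _ H2.
  have [-> ->] := indep _ _ H4; have [-> ->] := indep _ _ H6.
  by [].
have Hfree : free e.
  apply/freeP => k H i.
  rewrite Esum in H.
  have [h0 h1 h2 h3 [h4 [h5 h6 h7]]] := split4 _ H.
  rewrite -(inord_val i); case: i => m Hm /=.
  by do 8 (case: m Hm => [|m] Hm //).
have Hspan : span e = fullv.
  apply/eqP; rewrite eqEdim subvf /=.
  by move: Hfree; rewrite /free => /eqP ->; rewrite dim8.
move=> y.
have Hy : y \in span e by rewrite Hspan memvf.
rewrite (coord_span Hy) Esum /form.
by eexists; eexists; split; [apply: P1ab | apply: P1ab | reflexivity].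
Qed.

Lemma lin0 (f : C -> C) : is_linear_map f -> f 0 = 0.
Proof. by move=> lf; have := lf (-1) 0 0; rewrite scaler0 addr0 scaleN1r addNr. Qed.
Lemma linZ (f : C -> C) c y : is_linear_map f -> f (c *: y) = c *: f y.
Proof. by move=> lf; rewrite -[c *: y]addr0 lf lin0 // addr0. Qed.
Lemma linD (f : C -> C) y z : is_linear_map f -> f (y + z) = f y + f z.
Proof. by move=> lf; rewrite -[y]scale1r lf !scale1r. Qed.

Lemma aut_one (g : C -> C) : is_automorphism mul g -> g one = one.
Proof.
case=> lg [h gh hg] gm.
have := gm one (h one); rewrite one_l hg one_r //.
Qed.

Lemma aut_n (g : C -> C) : is_automorphism mul g -> forall y, n (g y) = n y.
Proof.
move=> ag y; have g1 := aut_one ag; case: ag => lg [h gh hg] gm.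
have H := gm y y; rewrite quad (quad (g y)) linD // linZ // -scaleNr linZ // g1 scaleNr in H.
have H2 : (t (g y) - t y) *: g y = (n (g y) - n y) *: one.
  apply: eq_pl => z; have Hz := congr1 (pl ^~ z) H; simpl in Hz.
  move: Hz; plexp => Hz; plexp.
  by apply: (lin_trans (esym Hz)); ring.
have [tE|tN] := eqVneq (t (g y) - t y) 0.
  move: H2; rewrite tE scale0r => /esym/eqP; rewrite scaler_eq0 (negbTE one_nz) orbF.
  by rewrite subr_eq0 => /eqP.
have gyE : g y = ((n (g y) - n y) / (t (g y) - t y)) *: one.
  by rewrite mulrC -scalerA -H2 scalerA mulVf // scale1r.
have yE : y = ((n (g y) - n y) / (t (g y) - t y)) *: one.
  by apply: (can_inj gh); rewrite linZ // g1.
by rewrite gyE -yE.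
Qed.


Lemma main_alg (K : {vspace C}) (x : C) (phi : C -> C) :
  is_2dim_composition_subalgebra mul one n K ->
  is_local_automorphism mul phi ->
  exists psi : C -> C,
    [/\ is_automorphism mul psi,
        (forall k, k \in K -> psi k = phi k)
      & psi x = phi x].
Proof.
move=> [dimK oneK mulK ndK] [lphi locphi].
have phi1 : phi one = one.
  by have [g [ag ->]] := locphi one; apply: aut_one.
have phin y : n (phi y) = n y.
  by have [g [ag ->]] := locphi y; apply: aut_n.
have phipl y z : pl (phi y) (phi z) = pl y z.
  by rewrite /polar -linD // !phin.
have phiD y z : phi (y + z) = phi y + phi z by exact: linD.
have phiZ c y : phi (c *: y) = c *: phi y by exact: linZ.
have phi0 : phi 0 = 0 by exact: lin0.
have [a aK aN] : exists2 a, a \in K & a \notin <[one]>%VS.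
  apply/subvPn; apply/negP => H.
  by have := dimvS H; rewrite dimK dim_vline one_nz.
have indep al be : al *: one + be *: a = 0 -> al = 0 /\ be = 0.
  move=> H.
  have be0 : be = 0.
    apply/eqP; apply/negPn/negP => nb; move: aN; apply/negP/negPn.
    apply/vlineP; exists (- (al / be)).
    apply: (scalerI nb); rewrite scalerA mulrN mulrCA mulfV // mulr1 scaleNr.
    by apply/eqP; rewrite -addr_eq0 addrC H.
  split => //; move: H; rewrite be0 scale0r addr0 => /eqP.
  by rewrite scaler_eq0 (negbTE one_nz) orbF => /eqP.
have KaK p : Ka a p -> p \in K.
  by move=> [al [be ->]]; rewrite memvD // memvZ.
have KKa p : p \in K -> Ka a p.
  pose e2 := [tuple one; a].
  have E2 (k : 'I_2 -> F) : \sum_(i < 2) k i *: e2`_i = k (inord 0) *: one + k (inord 1) *: a.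
    rewrite (eq_bigr (fun i : 'I_2 => k (inord i) *: e2`_i)) => [|i _]; last by rewrite inord_val.
    by rewrite !big_ord_recl big_ord0 /bump /= addr0.
  have free2 : free e2.
    apply/freeP => k; rewrite E2 => /indep [h0 h1] i.
    rewrite -(inord_val i); case: i => [[|[|m]] Hm] //.
  have sp2 : span e2 = K.
    apply/eqP; rewrite eqEdim; apply/andP; split.
      apply/span_subvP => y; rewrite !inE => /orP [/eqP -> // | ].
      by rewrite ?inE => /eqP ->.
    by move: free2; rewrite /free => /eqP ->; rewrite dimK.
  move=> pK; have pS : p \in span e2 by rewrite sp2.
  by rewrite (coord_span pS) E2; eexists; eexists.
have ndKa p : Ka a p -> (forall q, Ka a q -> pl p q = 0) -> p = 0.
  move=> Pp H; apply: ndK; first exact: KaK.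
  by move=> y /KKa; apply: H.
have gKa := good_Ka ndKa.
pose a' := phi a.
have phiKa al be : phi (al *: one + be *: a) = al *: one + be *: a'.
  by rewrite phiD !phiZ phi1.
have ta' : t a' = t a by rewrite /t -{1}phi1 phipl.
have na' : n a' = n a by rewrite phin.
have ndKa' p : Ka a' p -> (forall q, Ka a' q -> pl p q = 0) -> p = 0.
  move=> [al [be ->]] H.
  rewrite -phiKa.
  have -> : al *: one + be *: a = 0.
    apply: ndKa; first by exists al, be.
    by move=> q [ga [de ->]]; rewrite -phipl !phiKa; apply: H; exists ga, de.
  exact: phi0.
have gKa' := good_Ka ndKa'.
have indep' al be : al *: one + be *: a' = 0 -> al = 0 /\ be = 0.
  move=> H; apply: indep; apply: aniso; rewrite -phin phiKa H; exact: n0.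
pose g11 := pl one one; pose g12 := pl one a; pose g22 := pl a a.
pose D := g11 * g22 - g12 ^+ 2.
have D0 : D != 0.
  apply/negP => /eqP D0.
  have z1 : g12 *: one + (- g11) *: a = 0.
    apply: ndKa; first by exists g12, (- g11).
    move=> q [ga [de ->]]; plexp; rewrite -/g11 -/g12 -/g22 (plC a one) -/g12.
    transitivity (- de * D); first by rewrite /D; ring.
    by rewrite D0 mulr0.
  have [h12 h11] := indep _ _ z1.
  move/eqP: one_nz; apply; apply: ndKa; first by exists 1, 0; rewrite scale1r scale0r addr0.
  move=> q [ga [de ->]]; plexp; rewrite -/g11 -/g12.
  by rewrite h12 -[g11]opprK h11 oppr0; ring.
pose x1 := pl x one; pose xa := pl x a.
pose al0 := (x1 * g22 - xa * g12) / D; pose be0 := (xa * g11 - x1 * g12) / D.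
pose k0 := al0 *: one + be0 *: a.
pose w0 := x - k0.
have w0one : pl w0 one = 0.
  rewrite /w0 /k0; plexp; rewrite -/x1 -/g11 (plC a one) -/g12 /al0 /be0.
  by move: D0; rewrite /D => D0; field.
have w0a : pl w0 a = 0.
  rewrite /w0 /k0; plexp; rewrite -/xa -/g12 -/g22 /al0 /be0.
  by move: D0; rewrite /D => D0; field.
have Kaperp z : pl z one = 0 -> pl z a = 0 -> forall p, Ka a p -> pl p z = 0.
  by move=> h1 h2 p [al [be ->]]; plexp; rewrite !(plC _ z) h1 h2; ring.
have [w [wnz w1 wa w0E]] : exists w, [/\ w != 0, pl w one = 0, pl w a = 0 & w0 = 0 \/ w0 = w].
  have [w0z|w0nz] := eqVneq w0 0; last by exists w0; split => //; right.
  have lt2 : (2 < \dim (fullv : {vspace C}))%N by rewrite hdim8.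
  have [w [wnz Hw]] := @common_zero F C 2 (fun i y => pl y ([:: one; a]`_i))
    (fun i c y z => plL c y z _) lt2.
  exists w; split => //; [exact: (Hw ord0) | exact: (Hw (@Ordinal 2 1 isT)) | by left].
have nw : n w != 0 by apply/negP => /eqP /aniso /eqP; apply/negP.
have Hw := Kaperp w w1 wa.
pose w' := phi w.
have nw' : n w' = n w by rewrite phin.
have Hw' p : Ka a' p -> pl p w' = 0.
  by move=> [al [be ->]]; rewrite -phiKa phipl; apply: Hw; exists al, be.
pose zs := [:: one; a; w; a ** w].
have lt5 : (5 < \dim (fullv : {vspace C}))%N by rewrite hdim8.
have lin5 : forall (i : 'I_5) c y z,
    (fun i y => if (i : nat) == 4%N then pl (phi y) (a' ** w') else pl y (zs`_i)) i (c *: y + z)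
    = c * (fun i y => if (i : nat) == 4%N then pl (phi y) (a' ** w') else pl y (zs`_i)) i y
      + (fun i y => if (i : nat) == 4%N then pl (phi y) (a' ** w') else pl y (zs`_i)) i z.
  by move=> i c y z /=; case: ifP => _; rewrite ?lphi plL.
have [v [vnz Hv]] := common_zero lin5 lt5.
have v1 : pl v one = 0 by have := Hv (@Ordinal 5 0 isT).
have va : pl v a = 0 by have := Hv (@Ordinal 5 1 isT).
have vw : pl v w = 0 by have := Hv (@Ordinal 5 2 isT).
have vaw : pl v (a ** w) = 0 by have := Hv (@Ordinal 5 3 isT).
have v'aw : pl (phi v) (a' ** w') = 0 by have := Hv (@Ordinal 5 4 isT).
have nv : n v != 0 by apply/negP => /eqP /aniso /eqP; apply/negP.
pose v' := phi v.
have nv' : n v' = n v by rewrite phin.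
have Hvp p : P2 (Ka a) w p -> pl p v = 0.
  move=> [b [c [[al [be ->]] [ga [de ->]] ->]]].
  rewrite mulL mZl one_l; plexp; rewrite !(plC _ v) v1 va vw vaw; ring.
have Hvp' p : P2 (Ka a') w' p -> pl p v' = 0.
  move=> [b [c [[al [be ->]] [ga [de ->]] ->]]].
  rewrite mulL mZl one_l; plexp; rewrite !(plC _ v') v'aw.
  rewrite /v' /a' /w' -phi1 !phipl v1 va vw; ring.
have iso0 := iso_R0 ta' na'.
have g1 := good_step gKa Hw nw.
have nw'0 : n w' != 0 by rewrite nw'.
have nv'0 : n v' != 0 by rewrite nv'.
have g1' := good_step gKa' Hw' nw'0.
have iso1 := iso_step gKa gKa' iso0 Hw Hw' nw'.
have iso2 := iso_step g1 g1' iso1 Hvp Hvp' nv'.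
have T := span8 hdim8 gKa indep Hw nw Hvp nv.
have T' := span8 hdim8 gKa' indep' Hw' nw'0 Hvp' nv'0.
have [psi [apsi Hpsi]] := final iso2 T T'.
have RK al be : R2 (R2 (R0 a a') w w') v v' (al *: one + be *: a) (phi (al *: one + be *: a)).
  rewrite phiKa; apply: (R2_embed v v' iso1); apply: (R2_embed w w' iso0).
  by exists al, be.
have Rw : R2 (R2 (R0 a a') w w') v v' w w'.
  apply: (R2_embed v v' iso1); rewrite -{2}(one_l w) -{2}(one_l w'); apply: (R2_u w w' iso0).
  by exists 1, 0; rewrite scale1r !scale0r !addr0.
exists psi; split => //.
  by move=> k /KKa [al [be ->]]; apply: Hpsi.
have xE : x = k0 + w0 by rewrite /w0 addrC subrK.
case: w0E => w0E; rewrite xE w0E.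
  by rewrite addr0; apply: Hpsi; exact: (RK al0 be0).
rewrite phiD; apply: Hpsi.
by have := isoL iso2 1 (RK al0 be0) Rw; rewrite !scale1r.
Qed.
End Alg.

Unset Implicit Arguments.

Theorem lemma4p4 (F : fieldType) (C : vectType F) (mul : C -> C -> C) (one : C)
    (n : C -> F) (K : {vspace C}) (x : C) (phi : C -> C) :
  is_cayley_algebra mul one n ->
  is_division_algebra mul ->
  is_2dim_composition_subalgebra mul one n K ->
  is_local_automorphism mul phi ->
  exists psi : C -> C,
    [/\ is_automorphism mul psi,
        (forall k, k \in K -> psi k = phi k)
      & psi x = phi x].
Proof.
move=> [[mulL mulR] [unit [dim8 [[nZ plL] [nondeg nM]]]]] hdiv HK Hphi.
have one_l y : mul one y = y by case: (unit y).
have one_r y : mul y one = y by case: (unit y).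
exact: (main_alg mulL mulR one_l one_r nZ plL nondeg nM hdiv dim8 x HK Hphi).
Qed.
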